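(* Let $0\le\delta\le0.01$, $s\ge1$, $\Delta\in X$, and let $L\subset\mathbb{R}^3$ be a $\Delta$-rational plane. Let $\Omega(\Delta,L,s)$ be the set of nonzero $v\in\Delta\cap L$ with $\kappa(v)<e^{-3s}$. Then for every subset $\mathcal{T}\subseteq\Omega(\Delta,L,s)$, $$\int_{-1}^{1}\sup_{v\in\mathcal{T}}\phi_\delta(a_su_rv)\,dr\le200e^{-\delta s}\sup_{v\in\mathcal{T}}\phi_\delta(v).$$
   Context: $X$ is the space of unimodular lattices in $\mathbb{R}^3$; a subspace $L$ is $\Delta$-rational if $L\cap\Delta$ is a lattice in $L$. $\|\cdot\|$ is the supremum norm, $Q_0(v)=v_2^2-2v_1v_3$, $a_t=\mathrm{diag}(e^t,1,e^{-t})$, $u_r=\begin{pmatrix}1&r&r^2/2\\0&1&r\\0&0&1\end{pmatrix}$. For $w=(w_1,w_2,w_3)\ne0$: if $w_2=w_3=0$ put $\kappa(w)=1$; otherwise with $\rho(w)=-w_2/w_3$ and $\kappa_0(w)=Q_0(w)/w_3^2$ put $\kappa(w)=|\kappa_0(w)|$ if $|\kappa_0(w)|<1$ and $|\rho(w)|<2$, and $\kappa(w)=1$ otherwise. $\phi_\delta(w)=\kappa(w)^{-2\delta}\|w\|^{-1-\delta}\in(0,\infty]$. *)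

(* Defs.v *)
From HB Require Import structures.
From mathcomp Require Import all_boot all_order all_algebra.
From mathcomp Require Import all_classical all_reals all_analysis.
Set Implicit Arguments. Unset Strict Implicit. Unset Printing Implicit Defensive.
Import Order.TTheory GRing.Theory Num.Theory.
Local Open Scope ring_scope.
Local Open Scope classical_set_scope.

Section Defs.
Variable R : realType.

Definition mact (g : 'M[R]_3) (v : 'rV[R]_3) : 'rV[R]_3 := (g *m v^T)^T.

Definition c1 (v : 'rV[R]_3) : R := v 0 0.
Definition c2 (v : 'rV[R]_3) : R := v 0 1.
Definition c3 (v : 'rV[R]_3) : R := v 0 2%:R.

Definition supnorm (v : 'rV[R]_3) : R := \big[Num.max/0]_(i < 3) `|v 0 i|.

Definition unimodular_lattice (D : set 'rV[R]_3) : Prop :=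
  exists g : 'M[R]_3, `|\det g| = 1 /\
    D = [set v | exists k : 'rV[int]_3, v = map_mx (fun x : int => x%:~R) k *m g].

(* Lambda is a lattice in the subspace L (given as the row space of a matrix):
   a discrete additive subgroup contained in L and spanning L. *)
Definition lattice_in (Lam : set 'rV[R]_3) (L : 'M[R]_3) : Prop :=
  [/\ (forall v, Lam v -> (v <= L)%MS),
      Lam 0, (forall v w, Lam v -> Lam w -> Lam (v - w)),
      (exists2 eps : R, 0 < eps & forall v, Lam v -> v != 0 -> eps <= supnorm v) &
      (exists B : 'M[R]_3, (forall i, Lam (row i B)) /\ (B == L)%MS)].

Definition rational_plane (D : set 'rV[R]_3) (L : 'M[R]_3) : Prop :=
  \rank L = 2%N /\ lattice_in (fun v => D v /\ (v <= L)%MS) L.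

Definition Q0 (v : 'rV[R]_3) : R := c2 v ^+ 2 - 2 * c1 v * c3 v.

(* kappa; when w_3 = 0 (rho(w) = infinity, or w_2 = w_3 = 0) kappa = 1 *)
Definition kappa (w : 'rV[R]_3) : R :=
  if c3 w == 0 then 1 else
  let rho := - c2 w / c3 w in
  let k0 := Q0 w / c3 w ^+ 2 in
  if (`|k0| < 1) && (`|rho| < 2) then `|k0| else 1.

Definition phi (delta : R) (w : 'rV[R]_3) : \bar R :=
  if kappa w == 0 then
    (if delta == 0 then ((supnorm w)^-1)%:E else +oo%E)
  else ((kappa w `^ (-2 * delta)) * (supnorm w `^ (-1 - delta)))%:E.

Definition a_mat (t : R) : 'M[R]_3 :=
  \matrix_(i < 3, j < 3)
    (if i == j then (if val i == 0%N then expR t else if val i == 1%N then 1 else expR (- t))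
     else 0).

Definition u_mat (r : R) : 'M[R]_3 :=
  \matrix_(i < 3, j < 3)
    (match val i, val j with
     | 0%N, 0%N | 1%N, 1%N | 2%N, 2%N => 1
     | 0%N, 1%N | 1%N, 2%N => r
     | 0%N, 2%N => r ^+ 2 / 2
     | _, _ => 0 end).

Definition Omega (D : set 'rV[R]_3) (L : 'M[R]_3) (s : R) : set 'rV[R]_3 :=
  [set v | [/\ D v, (v <= L)%MS, v != 0 & kappa v < expR (- (3 * s))]].

End Defs.

(* Main.v *)
Require Import Defs.
From HB Require Import structures.
From mathcomp Require Import all_boot all_order all_algebra.
From mathcomp Require Import all_classical all_reals all_analysis.
From mathcomp Require Import ring lra.
Import Order.TTheory GRing.Theory Num.Theory.
Local Open Scope ring_scope.
Local Open Scope classical_set_scope.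

Section Helpers.
Import numFieldNormedType.Exports.
Variable R : realType.
Implicit Types (v w : 'rV[R]_3).
Lemma der_lin (k c x : R) : is_derive x 1 (fun y : R => k * (y - c)) k.
Proof. by apply: is_derive_eq; rewrite subr0 scaler1. Qed.

Lemma der_at (k c x : R) :
  is_derive x 1 (fun y : R => atan (k * (y - c))) (k / (1 + (k * (x - c)) ^+ 2)).
Proof.
have := @is_derive1_comp R atan (fun y : R => k * (y - c)) x _ _ (is_derive1_atan _) (der_lin k c x).
by rewrite mulrC.
Qed.

Definition Fat (K k c1 c2 : R) (x : R) := K * (atan (k * (x - c1)) + atan (k * (x - c2))).
Definition fat (K k c1 c2 : R) (x : R) := K * (k / (1 + (k * (x - c1)) ^+ 2) + k / (1 + (k * (x - c2)) ^+ 2)).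

Lemma der_F (K k c1 c2 x : R) : is_derive x 1 (Fat K k c1 c2) (fat K k c1 c2 x).
Proof.
have H := is_deriveD (der_at k c1 x) (der_at k c2 x).
by rewrite /Fat /fat; apply: is_derive_eq.
Qed.

Lemma cont_F (K k c1 c2 x : R) : Fat K k c1 c2 y @[y --> x] --> Fat K k c1 c2 x.
Proof.
apply: differentiable_continuous; apply/derivable1_diffP.
by have [] := der_F K k c1 c2 x.
Qed.

Lemma cont_f (K k c1 c2 x : R) : fat K k c1 c2 y @[y --> x] --> fat K k c1 c2 x.
Proof.
have hc (c : R) : (fun y : R => k / (1 + (k * (y - c)) ^+ 2)) y0 @[y0 --> x] --> k / (1 + (k * (x - c)) ^+ 2).
  apply: cvgM; first exact: cvg_cst.
  apply: cvgV; first by rewrite gt_eqF // ltr_pwDl // sqr_ge0.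
  apply: cvgD; first exact: cvg_cst.
  apply: (continuous_comp (f := fun y : R => k * (y - c)) (g := fun z : R => z ^+ 2)); last exact: exprn_continuous.
  apply: cvgM; first exact: cvg_cst.
  apply: cvgB; [exact: cvg_id | exact: cvg_cst].
apply: cvgM; first exact: cvg_cst.
exact: cvgD (hc c1) (hc c2).
Qed.

Lemma int_fat (K k c1 c2 : R) : 0 <= K ->
  (\int[@lebesgue_measure R]_(x in `[(-1)%R, 1%R]) (fat K k c1 c2 x)%:E <= (K * (pi *+ 2))%:E)%E.
Proof.
move=> K0.
rewrite (@continuous_FTC2 R (fat K k c1 c2) (Fat K k c1 c2)) //.
- rewrite -EFinB lee_fin /Fat -mulrBr ler_wpM2l //.
  have h (a b : R) : atan a - atan b <= pi.
    have := atan_ltpi2 a; have := atan_gtNpi2 b; move=> *.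
    lra.
  have := h (k * (1 - c1)) (k * (-1 - c1)).
  have := h (k * (1 - c2)) (k * (-1 - c2)).
  lra.
- by apply: continuous_subspaceT => x; exact: cont_f.
- split.
  + by move=> x _; have [] := der_F K k c1 c2 x.
  + exact/cvg_at_right_filter/cont_F.
  + exact/cvg_at_left_filter/cont_F.
- move=> x _; rewrite derive1E.
  by have [_ ->] := der_F K k c1 c2 x.
Qed.


Lemma mact_c (s r : R) (v : 'rV[R]_3) :
 let w := mact (a_mat s *m u_mat r) v in
 [/\ c1 w = expR s * (c1 v + r * c2 v + r^+2/2 * c3 v),
     c2 w = c2 v + r * c3 v & c3 w = expR (-s) * c3 v].
Proof.
rewrite /mact /c1 /c2 /c3 /=.
rewrite !mxE !big_ord_recr big_ord0 /= !mxE !big_ord_recr !big_ord0 /= !mxE /=.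
have e0 : widen_ord (leqnSn 2) (widen_ord (leqnSn 1) ord_max) = 0 :> 'I_3 by apply: val_inj.
have e1 : widen_ord (leqnSn 2) ord_max = 1 :> 'I_3 by apply: val_inj.
have e2 : ord_max = 2%:R :> 'I_3 by apply: val_inj.
rewrite e0 e1 e2; split; ring.
Qed.

Lemma supnormE v : supnorm v = Num.max `|c1 v| (Num.max `|c2 v| (Num.max `|c3 v| 0)).
Proof.
rewrite /supnorm /c1 /c2 /c3 !big_ord_recl big_ord0 /=.
have e1 : lift ord0 (ord0 : 'I_2) = 1 :> 'I_3 by apply: val_inj.
have e2 : lift ord0 (lift ord0 (ord0 : 'I_1)) = 2%:R :> 'I_3 by apply: val_inj.
by rewrite e1 e2.
Qed.

Lemma supnorm_ge v : [/\ 0 <= supnorm v, `|c1 v| <= supnorm v, `|c2 v| <= supnorm v & `|c3 v| <= supnorm v].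
Proof.
by rewrite supnormE; split; rewrite ?le_max ?lexx ?orbT.
Qed.

Lemma supnorm_le v M : `|c1 v| <= M -> `|c2 v| <= M -> `|c3 v| <= M -> 0 <= M -> supnorm v <= M.
Proof. by move=> *; rewrite supnormE !ge_max; apply/andP; split => //; apply/andP; split => //; apply/andP. Qed.

Definition rho v := - c2 v / c3 v.
Definition k0 v := Q0 v / c3 v ^+ 2.

Lemma kappaE v : kappa v = if c3 v == 0 then 1 else
   if (`|k0 v| < 1) && (`|rho v| < 2) then `|k0 v| else 1.
Proof. by []. Qed.

Lemma kappa_ge0 v : 0 <= kappa v.
Proof. by rewrite kappaE; case: ifP => //; case: ifP. Qed.

Lemma kappa_lt1 v : kappa v < 1 -> [/\ c3 v != 0, `|rho v| < 2 & kappa v = `|k0 v|].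
Proof.
rewrite kappaE; case: eqP => [_|/eqP h3]; first by rewrite ltxx.
by case: ifP => [/andP[_ h] _|_]; [split | rewrite ltxx].
Qed.

Lemma c1_form v : c3 v != 0 -> c1 v = c3 v * ((rho v) ^+ 2 - k0 v) / 2.
Proof. move=> h; rewrite /rho /k0 /Q0; field; exact: h. Qed.

Section W.
Variables (s r : R) (v : 'rV[R]_3).
Hypothesis h3 : c3 v != 0.
Let w := mact (a_mat s *m u_mat r) v.

Lemma w_facts : [/\ c3 w = (expR s)^-1 * c3 v,
   c1 w = expR s * c3 v * ((r - rho v) ^+ 2 - k0 v) / 2,
   k0 w = expR s ^+ 2 * k0 v & rho w = expR s * (rho v - r)].
Proof.
have [e1 e2 e3] := mact_c s r v; rewrite -/w in e1 e2 e3.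
have E0 : expR s != 0 by rewrite gt_eqF // expR_gt0.
rewrite expRN in e3.
split => //.
- rewrite e1 /rho /k0 /Q0; field; exact: h3.
- rewrite /k0 /Q0 e1 e2 e3; field; apply/andP; split => //.
- rewrite /rho e2 e3; field; apply/andP; split => //.
Qed.
End W.


Lemma h_bound (e x y k : R) : 0 < e -> e <= 1 -> (x - y)^+2 <= e^+2 -> `|k| < e^+3 ->
  (e + y^+2 / (16 * e)) / 2 <= Num.max e (`|x^+2 - k| / (2 * e)).
Proof.
move=> e0 e1 hxy hk.
have ke : k <= e^+2.
  apply: le_trans (ltW (ltr_normlW hk)) _.
  rewrite !exprS expr0 !mulr1; nra.
have -> : (e + y^+2 / (16 * e)) / 2 = (e^+2 + y^+2/16) / (2 * e) by field; rewrite gt_eqF.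
have i2e : 0 < (2 * e)^-1 by rewrite invr_gt0 mulr_gt0.
case: (leP (y^+2) (16 * e^+2)) => hy.
  rewrite le_max; apply/orP; left.
  rewrite ler_pdivrMr ?mulr_gt0 //; nra.
rewrite le_max; apply/orP; right; rewrite ler_pM2r //.
have hx : y^+2 / 2 - e^+2 <= x^+2.
  have h2 := sqr_ge0 (2 * x - y); rewrite !expr2 in hxy h2 *; clear -hxy h2; nra.
apply: le_trans (ler_norm _); nra.
Qed.

Definition phir (delta : R) x := expR ((-2 * delta) * ln (kappa x) + (-1 - delta) * ln (supnorm x)).

Lemma phiE (delta : R) x : (kappa x != 0 \/ delta = 0) -> 0 < supnorm x -> phi delta x = (phir delta x)%:E.
Proof.
move=> hk n0; rewrite /phi /phir.
have [k0|k0] := eqVneq (kappa x) 0.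
  have d0 : delta = 0 by case: hk => //; rewrite k0 eqxx.
  rewrite d0 eqxx k0 mulr0 mul0r add0r subr0 mulN1r expRN lnK //.
by rewrite /powR (negPf k0) gt_eqF // -expRD.
Qed.

Lemma phi_ge0 (delta : R) x : (0 <= phi delta x)%E.
Proof.
rewrite /phi; case: ifP => _; last by rewrite lee_fin mulr_ge0 // powR_ge0.
case: ifP => _ //; rewrite lee_fin invr_ge0; by case: (supnorm_ge x).
Qed.

Lemma phi_oo (delta : R) x : kappa x = 0 -> delta != 0 -> phi delta x = +oo%E.
Proof. by move=> k0 d0; rewrite /phi k0 eqxx (negPf d0). Qed.

Lemma kappa_w (s r : R) v : 0 <= s -> c3 v != 0 -> `|k0 v| < expR (- (3 * s)) ->
  expR s ^+ 2 * `|k0 v| <= kappa (mact (a_mat s *m u_mat r) v).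
Proof.
move=> s0 h3 hk; have [e3 _ ek _] := w_facts s r v h3.
have E0 : 0 < expR s := expR_gt0 s.
have hle : expR s ^+ 2 * `|k0 v| <= 1.
  apply: le_trans (_ : expR s ^+ 2 * expR (- (3 * s)) <= 1).
    by rewrite ler_pM2l ?exprn_gt0 // ltW.
  rewrite -expRM_natl -expRD -[X in _ <= X]expR0 ler_expR; lra.
rewrite kappaE e3 mulf_eq0 invr_eq0 (gt_eqF E0) (negPf h3) /=.
have en : `|expR s ^+ 2 * k0 v| = expR s ^+ 2 * `|k0 v| by rewrite normrM (ger0_norm (ltW (exprn_gt0 2 E0))).
rewrite ek en.
by case: ifP.
Qed.

Lemma core (delta s r c : R) v :
  0 <= delta -> 1 <= s -> c3 v != 0 -> `|rho v| < 2 -> `|k0 v| < expR (- (3 * s)) ->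
  kappa v = `|k0 v| -> (0 < `|k0 v| \/ delta = 0) -> `|rho v - c| <= expR (- s) ->
  phir delta (mact (a_mat s *m u_mat r) v) <=
    5/2 * expR (- (delta * s)) * phir delta v *
      (8 * ((expR s / 4) / (1 + (expR s / 4 * (r - c)) ^+ 2))).
Proof.
move=> d0 s1 h3 hr hk kv hkd hc.
have [e3 e1 ek er] := w_facts s r v h3.
set w := mact _ v in e3 e1 ek er *.
have E0 : 0 < expR s := expR_gt0 s.
set E := expR s in E0 e3 e1 ek er *.
have e0 : 0 < expR (- s) := expR_gt0 _.
have ee : expR (- s) = E^-1 by rewrite expRN.
set e := expR (- s) in e0 ee hc *.
have e1' : e <= 1 by rewrite /e -expR0 ler_expR; lra.
have e3s : expR (- (3 * s)) = e ^+ 3 by rewrite /e -expRM_natl mulrN.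
rewrite e3s in hk.
have t0 : 0 < `|c3 v| by rewrite normr_gt0.
set t := `|c3 v| in t0 *.
set N := supnorm w; set n := supnorm v.
set y := r - c.
set h := (e + y^+2 / (16 * e)) / 2.
have h0 : 0 < h by rewrite /h divr_gt0 // ltr_pwDl // divr_ge0 ?sqr_ge0 // mulr_ge0 // ltW.
have [N0 Nc1 _ Nc3] := supnorm_ge w.
have F1 : t * e <= N.
  apply: le_trans Nc3; rewrite e3 normrM ger0_norm ?invr_ge0 ?(ltW E0) //.
  by rewrite ee mulrC.
have F2 : t * h <= N.
  have hxy : ((r - rho v) - y) ^+ 2 <= e ^+ 2.
    have -> : (r - rho v) - y = - (rho v - c) by rewrite /y; ring.
    rewrite sqrrN -real_normK ?num_real //.
    by rewrite ler_sqr ?nnegrE // ltW.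
  have hb := @h_bound e (r - rho v) y (k0 v) e0 e1' hxy hk.
  apply: le_trans (ler_wpM2l (ltW t0) hb) _.
  rewrite maxr_pMr ?(ltW t0) // ge_max; apply/andP; split => //.
  apply: le_trans Nc1; rewrite e1 !normrM (ger0_norm (ltW E0)) (@ger0_norm _ 2^-1) ?invr_ge0 ?ler0n // ee -/t.
  rewrite le_eqVlt; apply/orP; left; apply/eqP; field; rewrite gt_eqF //.
have F3 : n <= 5 / 2 * t.
  apply: supnorm_le.
  - rewrite c1_form // !normrM -/t (@ger0_norm _ 2^-1) ?invr_ge0 ?ler0n //.
    have hr2 : (rho v) ^+ 2 <= 4.
      rewrite -real_normK ?num_real //; have := normr_ge0 (rho v); nra.
    have hk1 : `|k0 v| <= 1 by apply: le_trans (ltW hk) _; rewrite !exprS expr0 mulr1; nra.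
    have : `|rho v ^+ 2 - k0 v| <= 5.
      apply: le_trans (ler_normB _ _) _; rewrite normrX real_normK ?num_real //; lra.
    move=> h5; nra.
  - have -> : c2 v = - rho v * c3 v by rewrite /rho; field.
    rewrite normrM normrN -/t; nra.
  - rewrite -/t; nra.
  - nra.
have F4 : t <= n by case: (supnorm_ge v).
have n0 : 0 < n by apply: lt_le_trans F4.
have N0' : 0 < N by apply: lt_le_trans F2; rewrite mulr_gt0.
have kw : expR s ^+ 2 * `|k0 v| <= kappa w.
  by apply: kappa_w => //; [exact: le_trans ler01 s1 | rewrite e3s].
rewrite -/w -/E in kw.
have ih : 8 * ((E / 4) / (1 + (E / 4 * y) ^+ 2)) = expR (- ln h).
  rewrite expRN lnK ?posrE // /h ee; field.
  rewrite gt_eqF //=; apply/lt0r_neq0.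
  by rewrite ltr_pwDl // -mulrA mulr_ge0 ?sqr_ge0 // mulr_ge0 // ltW.
have i5 : 5 / 2 = expR (ln (5 / 2)) :> R by rewrite lnK // posrE.
rewrite /phir ih i5 -!expRD ler_expR -/N -/n.
have LN1 : - s + ln t <= ln N.
  have : ln (t * e) <= ln N by rewrite ler_ln ?posrE ?mulr_gt0.
  by rewrite lnM ?posrE // /e expRK; lra.
have LN2 : ln t + ln h <= ln N.
  have th : 0 < t * h by rewrite mulr_gt0.
  have H : ln (t * h) <= ln N by rewrite ler_ln ?posrE.
  by rewrite lnM ?posrE // in H.
have LN3 : ln n <= ln (5 / 2) + ln t.
  have th : 0 < 5 / 2 * t by rewrite mulr_gt0.
  have H : ln n <= ln (5 / 2 * t) by rewrite ler_ln ?posrE.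
  by rewrite lnM ?posrE // in H.
have L25 : ln (5 / 2) <= 2 :> R.
  rewrite -[X in _ <= X](expRK 2) ler_ln ?posrE ?expR_gt0 //.
  have := expR_ge1Dx (2 : R); lra.
have LK : delta * (2 * s + ln (kappa v)) <= delta * ln (kappa w).
  case: hkd => [k0p|->]; last by rewrite !mul0r.
  apply: ler_wpM2l => //.
  have kw0 : 0 < E ^+ 2 * `|k0 v| by rewrite mulr_gt0 // exprn_gt0.
  have kwp : 0 < kappa w by apply: lt_le_trans kw.
  have H : ln (E^+2 * `|k0 v|) <= ln (kappa w) by rewrite ler_ln ?posrE.
  by rewrite lnM ?posrE ?exprn_gt0 // /E -expRM_natl expRK in H; rewrite kv.
have P1 := ler_wpM2l d0 LN1.
have P3 := ler_wpM2l d0 LN3.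
have P25 : delta * ln (5 / 2) <= delta * (2 * s) by apply: ler_wpM2l => //; lra.
nra.
Qed.

Lemma sq_le (x e : R) : 0 <= e -> x ^+ 2 <= e ^+ 2 -> `|x| <= e.
Proof. by move=> e0; rewrite -real_normK ?num_real // ler_sqr ?nnegrE. Qed.

Lemma normal_vec (L : 'M[R]_3) : \rank L = 2%N ->
  exists n : R * R * R, [/\ n.1.1 != 0 \/ n.1.2 != 0 \/ n.2 != 0 &
    forall v, (v <= L)%MS -> n.1.1 * c1 v + n.1.2 * c2 v + n.2 * c3 v = 0].
Proof.
move=> rL.
set K := cokermx L.
have rK : \rank K = 1%N by rewrite mxrank_coker rL.
have [[i [j Kij]]|hn] := pselect (exists i j, K i j != 0); last first.
  exfalso; move: rK; suff -> : K = 0 by rewrite mxrank0.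
  apply/matrixP => i j; rewrite [X in _ = X]mxE.
  by apply/eqP/negPn/negP => h; apply: hn; exists i, j.
exists (K 0 j, K 1 j, K 2%:R j); split.
  move: Kij; case: i => [[|[|[|//]]] hi] Kij.
  - by left; move: Kij; congr (_ != 0); congr (K _ j); apply: val_inj.
  - by right; left; move: Kij; congr (_ != 0); congr (K _ j); apply: val_inj.
  - by right; right; move: Kij; congr (_ != 0); congr (K _ j); apply: val_inj.
move=> v /submxP [D ->].
have : (D *m L *m K) 0 j = 0 by rewrite -mulmxA mulmx_coker mulmx0 mxE.
rewrite mxE !big_ord_recl big_ord0 addr0 /= /c1 /c2 /c3.
have e1 : lift ord0 (ord0 : 'I_2) = 1 :> 'I_3 by apply: val_inj.
have e2 : lift ord0 (lift ord0 (ord0 : 'I_1)) = 2%:R :> 'I_3 by apply: val_inj.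
rewrite e1 e2 => <-; ring.
Qed.

Lemma clusters (s : R) (L : 'M[R]_3) (T : set 'rV[R]_3) : \rank L = 2%N -> 0 <= s ->
  (forall v, T v -> [/\ (v <= L)%MS, c3 v != 0 & `|k0 v| < expR (- (3 * s))]) ->
  exists c : R * R, forall v, T v -> `|rho v - c.1| <= expR (- s) \/ `|rho v - c.2| <= expR (- s).
Proof.
move=> rL s0 hT.
have [[[n1 n2] n3] [/= nz hn]] := normal_vec L rL.
have e0 : 0 < expR (- s) := expR_gt0 _.
set e := expR (- s) in e0 *.
have e1 : e <= 1 by rewrite /e -expR0 ler_expR; lra.
have e3s : expR (- (3 * s)) = e ^+ 3 by rewrite /e -expRM_natl mulrN.
have e32 : e ^+ 3 <= e ^+ 2 by rewrite !exprS expr0 !mulr1; nra.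
have [n10|n10] := eqVneq n1 0.
  have [n20|n20] := eqVneq n2 0.
    exists (0, 0) => v /hT [vL v3 _]; exfalso.
    have := hn v vL; rewrite n10 n20 !mul0r !add0r => /eqP.
    rewrite mulf_eq0 (negPf v3) orbF => n30.
    by move: nz; rewrite n10 n20 (eqP n30) eqxx; case=> // [[]].
  exists (n3 / n2, n3 / n2) => v /hT [vL v3 _]; left.
  have := hn v vL; rewrite n10 mul0r add0r => h.
  have -> : rho v - n3 / n2 = - (n2 * c2 v + n3 * c3 v) / (n2 * c3 v).
    by rewrite /rho; field; apply/andP.
  by rewrite h oppr0 mul0r normr0 ltW.
set a := n2 / n1; set b := n3 / n1; set D := a ^+ 2 - 2 * b.
have kf : forall v, T v -> k0 v = (rho v - a) ^+ 2 - D.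
  move=> v /hT [vL v3 _]; have h := hn v vL.
  have -> : k0 v = (rho v - a) ^+ 2 - D - 2 * (n1 * c1 v + n2 * c2 v + n3 * c3 v) / (n1 * c3 v).
    by rewrite /k0 /Q0 /rho /D /a /b; field; apply/andP.
  by rewrite h mulr0 mul0r subr0.
have [D0|D0] := leP 0 D.
  set q := Num.sqrt D.
  have q2 : q ^+ 2 = D by rewrite sqr_sqrtr.
  exists (a + q, a - q) => v Tv /=.
  have [l1|g1] := leP `|rho v - (a + q)| e; first by left.
  have [l2|g2] := leP `|rho v - (a - q)| e; first by right.
  exfalso; have [_ _ hk] := hT v Tv; rewrite e3s (kf v Tv) in hk.
  have : (rho v - a) ^+ 2 - D = (rho v - (a + q)) * (rho v - (a - q)) by rewrite -q2; ring.
  move=> eq; rewrite eq normrM in hk.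
  have : e * e < `|rho v - (a + q)| * `|rho v - (a - q)| by rewrite ltr_pM // ltW.
  rewrite -expr2; lra.
exists (a, a) => v Tv /=; left; apply: sq_le; first exact: ltW.
have [_ _ hk] := hT v Tv; rewrite e3s (kf v Tv) in hk.
have := ltr_normlW hk; lra.
Qed.


Section Int.
Local Open Scope ereal_scope.
Lemma my_le_integral (D : set R) (f g : R -> \bar R) :
  (forall x, D x -> 0 <= f x) -> (forall x, D x -> f x <= g x) ->
  \int[@lebesgue_measure R]_(x in D) f x <= \int[@lebesgue_measure R]_(x in D) g x.
Proof.
move=> f0 fg.
have g0 : forall x, D x -> 0 <= g x by move=> x Dx; exact: le_trans (f0 x Dx) (fg x Dx).
rewrite ge0_integralE // [X in _ <= X]ge0_integralE //.
apply: ereal_sup_le => _ [h /= hf <-]; exists h => //= x.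
apply: le_trans (hf x) _; rewrite /patch; case: ifP => // /[1!inE] Dx.
exact: fg.
Qed.
End Int.

End Helpers.
Arguments der_lin {R}.
Arguments der_at {R}.
Arguments Fat {R}.
Arguments fat {R}.
Arguments der_F {R}.
Arguments cont_F {R}.
Arguments cont_f {R}.
Arguments int_fat {R}.
Arguments mact_c {R}.
Arguments supnormE {R}.
Arguments supnorm_ge {R}.
Arguments supnorm_le {R}.
Arguments rho {R}.
Arguments k0 {R}.
Arguments kappaE {R}.
Arguments kappa_ge0 {R}.
Arguments kappa_lt1 {R}.
Arguments c1_form {R}.
Arguments w_facts {R}.
Arguments h_bound {R}.
Arguments phir {R}.
Arguments phiE {R}.
Arguments phi_ge0 {R}.
Arguments phi_oo {R}.
Arguments kappa_w {R}.
Arguments core {R}.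
Arguments sq_le {R}.
Arguments normal_vec {R}.
Arguments clusters {R}.
Arguments my_le_integral {R}.

Theorem proposition4p5 (R : realType) (delta s : R) (D : set 'rV[R]_3) (L : 'M[R]_3)
  (T : set 'rV[R]_3) :
  0 <= delta -> delta <= 1 / 100 -> 1 <= s ->
  unimodular_lattice D -> rational_plane D L ->
  T `<=` Omega D L s ->
  (\int[@lebesgue_measure R]_(r in `[(-1)%R, 1%R])
      ereal_sup [set phi delta (mact (a_mat s *m u_mat r) v) | v in T]
   <= (200 * expR (- (delta * s)))%:E * ereal_sup [set phi delta v | v in T])%E.
Proof.
move=> d0 d1 s1 _ [rL _] hT.
have cpos : 0 < 200 * expR (- (delta * s)) :> R by rewrite mulr_gt0 // expR_gt0.
have [[v0 Tv0]|hn] := pselect (exists v, T v); last first.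
  have -> : T = set0.
    by apply/seteqP; split => x // Tx; exfalso; apply: hn; exists x.
  rewrite image_set0 ereal_sup0.
  under eq_integral => r _ do rewrite image_set0 ereal_sup0.
  rewrite integral_cst //= lebesgue_measure_itv /=.
  rewrite ifT; last by rewrite lte_fin; lra.
  rewrite (@gt0_mulNye R); last by rewrite -EFinD lte_fin; lra.
  by rewrite muleC (@gt0_mulNye R) ?lte_fin.
set M := ereal_sup _.
have Mge : forall v, T v -> (phi delta v <= M)%E.
  by move=> v Tv; apply: ereal_sup_ubound; exists v.
have M0 : (0 <= M)%E := le_trans (phi_ge0 delta v0) (Mge v0 Tv0).
have [Moo|Mfin] := eqVneq M +oo%E.
  by rewrite Moo muleC (@gt0_mulye R) ?lte_fin // leey.
have [m Mm] : exists m : R, M = m%:E.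
  exists (fine M); rewrite fineK // ge0_fin_numE //.
  by rewrite lt_neqAle Mfin leey.
have m0 : 0 <= m by rewrite -lee_fin -Mm.
rewrite Mm.
have e3 : expR (- (3 * s)) <= 1.
  rewrite -[X in _ <= X]expR0 ler_expR; lra.
have hv : forall v, T v -> [/\ (v <= L)%MS, c3 v != 0, `|rho v| < 2, kappa v = `|k0 v|
    & `|k0 v| < expR (- (3 * s))].
  move=> v /hT [_ vL _ kv].
  have [c3v rv kk] := kappa_lt1 v (lt_le_trans kv e3).
  by split => //; rewrite -kk.
have hphi : forall v, T v -> (kappa v != 0 \/ delta = 0) /\ phir delta v <= m.
  move=> v Tv; have [_ c3v _ _ _] := hv v Tv.
  have n0 : 0 < supnorm v.
    have [_ _ _ h] := supnorm_ge v; apply: lt_le_trans h; by rewrite normr_gt0.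
  have hk : kappa v != 0 \/ delta = 0.
    have [dz|dnz] := eqVneq delta 0; first by right.
    left; apply/negP => /eqP k0; have := Mge v Tv.
    by rewrite phi_oo // Mm leye_eq.
  split => //; rewrite -lee_fin -(phiE delta v hk n0) -Mm; exact: Mge.
have [[c1' c2'] hc] := @clusters R s L T rL (le_trans ler01 s1)
   (fun v Tv => let: And5 a b _ _ e := hv v Tv in And3 a b e).
set K := 5 / 2 * expR (- (delta * s)) * m * 8.
have K0 : 0 <= K by rewrite !mulr_ge0 // ?expR_ge0 // ltW // expR_gt0.
set k := expR s / 4.
have qge0 : forall c r : R, 0 <= k / (1 + (k * (r - c)) ^+ 2).
  by move=> c r; rewrite divr_ge0 // ?addr_ge0 ?sqr_ge0 // divr_ge0 // ltW // expR_gt0.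
have pt : forall r, (ereal_sup [set phi delta (mact (a_mat s *m u_mat r) v) | v in T]
     <= (fat K k c1' c2' r)%:E)%E.
  move=> r; apply: ge_ereal_sup => _ [v Tv <-].
  have [_ c3v rv kv k0v] := hv v Tv.
  have [hk phim] := hphi v Tv.
  have [e3w _ _ _] := w_facts s r v c3v.
  set w := mact _ v in e3w *.
  have nw : 0 < supnorm w.
    have [_ _ _ h] := supnorm_ge w; apply: lt_le_trans h.
    by rewrite e3w normr_gt0 mulf_neq0 // invr_eq0 gt_eqF // expR_gt0.
  have hkw : kappa w != 0 \/ delta = 0.
    case: hk => [kv0|]; last by right.
    left; apply: lt0r_neq0; apply: lt_le_trans (kappa_w s r v (le_trans ler01 s1) c3v k0v).
    by rewrite mulr_gt0 ?exprn_gt0 ?expR_gt0 // -kv lt0r kv0 kappa_ge0.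
  have hkd : 0 < `|k0 v| \/ delta = 0.
    by case: hk => [kv0|]; [left; rewrite -kv lt0r kv0 kappa_ge0 | right].
  rewrite (phiE delta w hkw nw) lee_fin.
  have pv0 : 0 <= phir delta v by rewrite /phir expR_ge0.
  have aux : forall c, `|rho v - c| <= expR (- s) ->
      phir delta w <= 5 / 2 * expR (- (delta * s)) * m * (8 * (k / (1 + (k * (r - c)) ^+ 2))).
    move=> c hcv; apply: le_trans (core delta s r c v d0 s1 c3v rv k0v kv hkd hcv) _.
    rewrite -/k; apply: ler_wpM2r; first by rewrite mulr_ge0 // qge0.
    by apply: ler_wpM2l => //; rewrite mulr_ge0 // expR_ge0.
  rewrite /fat -/K.
  have A0 : 0 <= 5 / 2 * expR (- (delta * s)) * m by rewrite !mulr_ge0 // expR_ge0.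
  case: (hc v Tv) => /aux h; apply: le_trans h _; rewrite /= /K;
    set A := 5 / 2 * _ * m; rewrite -(mulrA A 8);
    apply: ler_wpM2l => //; rewrite ler_wpM2l //.
    by rewrite lerDl qge0.
  by rewrite lerDr qge0.
have int0 : forall r, `[(-1)%R, 1%R] r ->
    (0 <= ereal_sup [set phi delta (mact (a_mat s *m u_mat r) v) | v in T])%E.
  move=> r _; apply: le_trans (phi_ge0 delta (mact (a_mat s *m u_mat r) v0)) _.
  by apply: ereal_sup_ubound; exists v0.
apply: le_trans (my_le_integral _ _ _ int0 (fun r _ => pt r)) _.
apply: le_trans (int_fat K k c1' c2' K0) _.
rewrite -EFinM lee_fin /K.
have := pihalf_lt2 R; have := pi_gt0 R.
have := expR_gt0 (- (delta * s)).
set ex := expR _; move=> ex0 p0 p2.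
rewrite -mulr_natr.
have : 0 <= ex * m by rewrite mulr_ge0 // ltW.
nra.
Qed.
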